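(* Let $\Gamma$ be a population network game, $\beta>0$, $\lambda\ge0$, and let $\sigma^2_{js}\ge0$ ($j\in V$, $s\in S_j$) be given. Consider the mean belief dynamics of an initially heterogeneous system, $$\frac{d\bar{\mu}_{is}}{dt}=\frac{f_{i,s}(\bar{\boldsymbol{\mu}})-\bar{\mu}_{is}}{\lambda+t+1}+\frac{\sum_{j\in V_i}\sum_{s'\in S_j}\frac{\partial^2 f_{i,s}}{\partial\mu_{js'}^2}(\bar{\boldsymbol{\mu}})\,\mathrm{Var}(\mu_{js'})(t)}{2(\lambda+t+1)},\qquad \mathrm{Var}(\mu_{js'})(t)=\Big(\tfrac{\lambda+1}{\lambda+t+1}\Big)^2\sigma^2_{js'},$$ for $i\in V$, $s\in S_i$. After the time reparametrization $\tau=\ln\frac{\lambda+t+1}{\lambda+1}$, this system is asymptotically autonomous with limit equation $$\frac{d\bar{\boldsymbol{\mu}}_i}{d\tau}=f_i(\{\bar{\boldsymbol{\mu}}_j\}_{j\in V_i})-\bar{\boldsymbol{\mu}}_i,\qquad i\in V,$$ i.e. its right-hand side $F(\tau,\bar{\boldsymbol{\mu}})$ converges, as $\tau\to\infty$, to $f(\bar{\boldsymbol{\mu}})-\bar{\boldsymbol{\mu}}$ uniformly on compact sets; and this limit equation is equivalent, via the same time reparametrization, to the belief dynamics of homogeneous systems $\frac{d\mu_{is}}{dt}=\frac{f_{i,s}(\{\boldsymbol{\mu}_j\}_{j\in V_i})-\mu_{is}}{\lambda+t+1}$.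
   Context: A population network game $\Gamma$ consists of a finite undirected graph with vertex set $V=\{1,\dots,n\}$ (populations) and edge set $E$; $V_i=\{j:\{i,j\}\in E\}$. Population $i$ has finite strategy set $S_i$, $\Delta_i\subset\mathbb{R}^{|S_i|}$ is the probability simplex, and each edge $\{i,j\}$ carries payoff matrices $\mathbf{A}_{ij}\in\mathbb{R}^{|S_i|\times|S_j|}$, $\mathbf{A}_{ji}\in\mathbb{R}^{|S_j|\times|S_i|}$. The logit choice function is $f_{i,s}(\{\boldsymbol{\mu}_j\}_{j\in V_i})=\exp\big(\beta\sum_{j\in V_i}\mathbf{e}_s^\top\mathbf{A}_{ij}\boldsymbol{\mu}_j\big)/\sum_{s'\in S_i}\exp\big(\beta\sum_{j\in V_i}\mathbf{e}_{s'}^\top\mathbf{A}_{ij}\boldsymbol{\mu}_j\big)$ ($\mathbf{e}_s$ the $s$-th unit vector), regarded as a smooth function of $(\boldsymbol{\mu}_j)_{j\in V_i}\in\prod_{j\in V_i}\mathbb{R}^{|S_j|}$; $f_{i,s}(\bar{\boldsymbol{\mu}})$ means $f_{i,s}(\{\bar{\boldsymbol{\mu}}_j\}_{j\in V_i})$. In a heterogeneous system, $\bar{\boldsymbol{\mu}}_j$ is the mean of the beliefs about population $j$ held across the system and $\sigma^2_{js}$ is the initial variance of the belief component $\mu_{js}$; the displayed variance formula is how this variance evolves. A nonautonomous system $x'=F(t,x)$ is asymptotically autonomous with limit equation $y'=g(y)$ if $F(t,x)\to g(x)$ as $t\to\infty$ uniformly on each compact set. *)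

(* Defs.v *)
From mathcomp Require Import all_boot all_order all_algebra.
From mathcomp Require Import all_classical all_reals all_analysis.
Export ArrowAsUniformType.
Import Order.TTheory GRing.Theory Num.Theory.


Local Open Scope ring_scope.
Local Open Scope classical_set_scope.

(* A population network game on V = 'I_n:
   - adj : rel 'I_n is the (symmetric, irreflexive) edge relation, V_i = [pred j | adj i j];
   - population i has strategy set S_i = 'I_(m i);
   - A i j : 'M[R]_(m i, m j) is the payoff matrix A_ij (only used when adj i j).
   The state space prod_i R^{|S_i|} is represented as functions on the finite
   index type  pcoord m = {i : 'I_n & 'I_(m i)}  (pairs (i,s) with s in S_i),
   i.e. x (existT _ i s) = x_{is}.  It carries the canonical (sup-norm) uniform
   topology of functions on a finite type, i.e. the usual topology of R^N. *)

Definition pcoord {n : nat} (m : 'I_n -> nat) : finType := {i : 'I_n & 'I_(m i)}.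

Definition pstate (R : realType) {n : nat} (m : 'I_n -> nat) := pcoord m -> R^o.

Definition ck {n : nat} {m : 'I_n -> nat} (i : 'I_n) (s : 'I_(m i)) : pcoord m :=
  existT (fun i => 'I_(m i)) i s.

Section Game.
Context {R : realType} {n : nat} {m : 'I_n -> nat}.
Variables (adj : rel 'I_n) (A : forall i j : 'I_n, 'M[R]_(m i, m j)) (beta : R).

Definition payoff_ij (x : pstate R m) (i j : 'I_n) (s : 'I_(m i)) : R :=
  \sum_(s' < m j) A i j s s' * x (ck j s').

Definition util (x : pstate R m) (i : 'I_n) (s : 'I_(m i)) : R :=
  beta * \sum_(j < n | adj i j) payoff_ij x i j s.

Definition logit (x : pstate R m) (i : 'I_n) (s : 'I_(m i)) : R :=
  expR (util x i s) / \sum_(s' < m i) expR (util x i s').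

Definition upd (x : pstate R m) (k : pcoord m) (y : R) : pstate R m :=
  fun k' => if k' == k then y else x k'.

Definition d2logit (x : pstate R m) (i : 'I_n) (s : 'I_(m i)) (k : pcoord m) : R :=
  derive1n 2 (fun y => logit (upd x k y) i s) (x k).

End Game.

Section Dynamics.
Context {R : realType} {n : nat} {m : 'I_n -> nat}.
Variables (adj : rel 'I_n) (A : forall i j : 'I_n, 'M[R]_(m i, m j)).
Variables (beta lambda : R) (sigma2 : pcoord m -> R).

Definition variance (t : R) (k : pcoord m) : R :=
  ((lambda + 1) / (lambda + t + 1)) ^+ 2 * sigma2 k.

Definition het_rhs (t : R) (x : pstate R m) : pstate R m :=
  fun k => let: existT i s := k in
    (logit adj A beta x i s - x k) / (lambda + t + 1)
    + (\sum_(j < n | adj i j) \sum_(s' < m j)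
         d2logit adj A beta x i s (ck j s') * variance t (ck j s'))
      / (2 * (lambda + t + 1)).

Definition hom_rhs (t : R) (x : pstate R m) : pstate R m :=
  fun k => let: existT i s := k in
    (logit adj A beta x i s - x k) / (lambda + t + 1).

Definition tau_of_t (t : R) : R := ln ((lambda + t + 1) / (lambda + 1)).
Definition t_of_tau (tau : R) : R := (lambda + 1) * expR tau - lambda - 1.

(* right-hand side of the heterogeneous system after the reparametrization:
   d mu/d tau = (dt/d tau) * (d mu/dt) with dt/d tau = (lambda+1) e^tau *)
Definition het_rhs_tau (tau : R) (x : pstate R m) : pstate R m :=
  fun k => (lambda + 1) * expR tau * het_rhs (t_of_tau tau) x k.

Definition limit_rhs (x : pstate R m) : pstate R m :=
  fun k => let: existT i s := k in logit adj A beta x i s - x k.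

End Dynamics.

Definition asymptotically_autonomous {R : realType} {T : finType}
    (F : R -> (T -> R^o) -> (T -> R^o)) (g : (T -> R^o) -> (T -> R^o)) : Prop :=
  forall C : set (T -> R^o), compact C ->
    forall e : R, 0 < e -> exists t0 : R, forall t : R, t0 < t ->
      forall x, C x -> forall k : T, `|F t x k - g x k| < e.

Definition solves_on {R : realType} {T : finType}
    (F : R -> (T -> R^o) -> (T -> R^o)) (D : set R) (u : R -> T -> R^o) : Prop :=
  forall t, D t -> forall k : T,
    derivable (fun r => u r k) t 1 /\ derive1 (fun r => u r k) t = F t (u t) k.

(* Main.v *)
Require Import Defs.
From mathcomp Require Import all_boot all_order all_algebra.
From mathcomp Require Import all_classical all_reals all_analysis.
From mathcomp Require Import ring lra.
Import Order.TTheory GRing.Theory Num.Theory.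
Import numFieldNormedType.Exports.
Local Open Scope ring_scope.
Local Open Scope classical_set_scope.

Lemma is_derive_ext {R : realType} {f g : R -> R} {x d d' : R} :
  f =1 g -> is_derive x 1 f d -> d = d' -> is_derive x 1 g d'.
Proof. by move=> /funext -> H <-. Qed.

Lemma is_derive_affine {R : realType} (a b x : R) :
  is_derive x 1 (fun r : R => a + b * r) b.
Proof.
have H := is_deriveD (is_derive_cst a x 1) (is_deriveZ b (is_derive_id x (1:R))).
have E : (cst a + b \*: id) = (fun r : R => a + b * r) by apply/funext.
rewrite -E; apply: is_derive_eq H _.
by rewrite add0r /GRing.scale /= mulr1.
Qed.

Lemma is_derive_mul {R : realType} {f g : R -> R} {x df dg : R} :
  is_derive x 1 f df -> is_derive x 1 g dg ->
  is_derive x 1 (fun z => f z * g z) (df * g x + f x * dg).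
Proof.
move=> Df Dg; have H := is_deriveM Df Dg.
apply: (is_derive_ext _ H) => //=.
by rewrite /GRing.scale /= addrC mulrC [f x * _]mulrC.
Qed.

Lemma is_derive_div {R : realType} {f g : R -> R} {x df dg : R} :
  g x != 0 -> is_derive x 1 f df -> is_derive x 1 g dg ->
  is_derive x 1 (fun z => f z / g z) (df / g x - f x * dg / (g x) ^+ 2).
Proof.
move=> g0 Df Dg; have Dv := is_deriveV g0 Dg.
have H := is_derive_mul Df Dv.
apply: (is_derive_ext _ H) => //=.
rewrite /GRing.scale /=; field; exact: g0.
Qed.

Lemma is_derive_sumf {R : realType} {N : nat} {h : 'I_N -> R -> R} {x : R} {dh : 'I_N -> R} :
  (forall i, is_derive x 1 (h i) (dh i)) ->
  is_derive x 1 (fun z => \sum_(i < N) h i z) (\sum_(i < N) dh i).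
Proof.
move=> D; have H := is_derive_sum D.
apply: (is_derive_ext _ H) => // z.
by rewrite fct_sumE.
Qed.

Lemma is_derive_expaff {R : realType} (a c x : R) :
  is_derive x 1 (fun y => expR (a + c * y)) (c * expR (a + c * x)).
Proof.
have H := @is_derive1_comp _ (@expR R) (fun y => a + c * y) x _ _ (is_derive_expR _) (is_derive_affine a c x).
apply: (is_derive_ext _ H) => //; by rewrite mulrC.
Qed.

Section Softmax.
Context {R : realType} {N : nat} (a c : 'I_N -> R) (s : 'I_N).

Definition Ez j (y : R) := expR (a j + c j * y).
Definition Zs y := \sum_(j < N) Ez j y.
Definition Z1 y := \sum_(j < N) c j * Ez j y.
Definition Z2 y := \sum_(j < N) c j ^+ 2 * Ez j y.
Definition pp y := Ez s y / Zs y.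
Definition qq y := Z1 y / Zs y.
Definition rr y := Z2 y / Zs y.
Definition F1 y := pp y * (c s - qq y).
Definition F2 y := pp y * (c s - qq y) * (c s - qq y) - pp y * (rr y - qq y ^+ 2).

Lemma Ez_gt0 j (y : R) : 0 < Ez j y. Proof. exact: expR_gt0. Qed.

Lemma Zs_gt0 (y : R) : 0 < Zs y.
Proof.
rewrite /Zs (bigD1 s) //=; apply: (lt_le_trans (Ez_gt0 s y)).
rewrite lerDl; apply: sumr_ge0 => j _; exact/ltW/Ez_gt0.
Qed.

Lemma D_Ez j (y : R) : is_derive y 1 (Ez j) (c j * Ez j y).
Proof. exact: is_derive_expaff. Qed.

Lemma D_Zs (y : R) : is_derive y 1 Zs (Z1 y).
Proof. exact: is_derive_sumf (fun j => D_Ez j y). Qed.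

Lemma D_Z1 (y : R) : is_derive y 1 Z1 (Z2 y).
Proof.
apply: (is_derive_sumf (dh := fun j => c j ^+ 2 * Ez j y)) => j.
have H := is_derive_mul (is_derive_cst (c j) y 1) (D_Ez j y).
apply: (is_derive_ext _ H) => //=; rewrite mul0r add0r mulrA expr2 //.
Qed.

Lemma D_pp (y : R) : is_derive y 1 pp (pp y * (c s - qq y)).
Proof.
have H := is_derive_div (lt0r_neq0 (Zs_gt0 y)) (D_Ez s y) (D_Zs y).
apply: (is_derive_ext _ H) => //; rewrite /pp /qq.
have := Zs_gt0 y; move: (Zs y) => Z Z0.
field; exact: lt0r_neq0.
Qed.

Lemma D_qq (y : R) : is_derive y 1 qq (rr y - qq y ^+ 2).
Proof.
have H := is_derive_div (lt0r_neq0 (Zs_gt0 y)) (D_Z1 y) (D_Zs y).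
apply: (is_derive_ext _ H) => //; rewrite /rr /qq.
have := Zs_gt0 y; move: (Zs y) => Z Z0.
field; exact: lt0r_neq0.
Qed.

Lemma D_F1 (y : R) : is_derive y 1 F1 (F2 y).
Proof.
have Dq : is_derive y 1 (fun z => c s - qq z) (- (rr y - qq y ^+ 2)).
  have H := is_deriveB (is_derive_cst (c s) y 1) (D_qq y).
  by apply: (is_derive_ext _ H) => //=; rewrite sub0r.
have H := is_derive_mul (D_pp y) Dq.
apply: (is_derive_ext _ H) => //; rewrite /F2; ring.
Qed.

Lemma d2_softmax (y : R) :
  derive1n 2 (fun z => Ez s z / Zs z) y = F2 y.
Proof.
rewrite /derive1n /=.
have -> : derive1 (fun z => Ez s z / Zs z) = F1.
  apply/funext => z; rewrite derive1E.
  have := D_pp z; rewrite /pp => H; exact: (@derive_val _ _ _ _ _ _ _ H).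
rewrite derive1E; exact: (@derive_val _ _ _ _ _ _ _ (D_F1 y)).
Qed.

Definition Cb := \sum_(j < N) `|c j|.
Definition C2b := \sum_(j < N) c j ^+ 2.

Lemma Ez_le_Zs j (y : R) : Ez j y <= Zs y.
Proof.
rewrite /Zs (bigD1 j) //= lerDl; apply: sumr_ge0 => k _; exact/ltW/Ez_gt0.
Qed.

Lemma c_le_Cb j : `|c j| <= Cb.
Proof.
rewrite /Cb (bigD1 j) //= lerDl; apply: sumr_ge0 => k _; exact: normr_ge0.
Qed.

Lemma Cb_ge0 : 0 <= Cb.
Proof. apply: sumr_ge0 => k _; exact: normr_ge0. Qed.

Lemma C2b_ge0 : 0 <= C2b.
Proof. apply: sumr_ge0 => k _; exact: sqr_ge0. Qed.

Lemma pp_bounds (y : R) : 0 <= pp y <= 1.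
Proof.
have Z0 := Zs_gt0 y.
rewrite /pp divr_ge0 ?(ltW (Ez_gt0 _ _)) ?(ltW Z0) //=.
by rewrite ler_pdivrMr // mul1r Ez_le_Zs.
Qed.

Lemma qq_bound (y : R) : `|qq y| <= Cb.
Proof.
have Z0 := Zs_gt0 y.
rewrite /qq normrM normfV (gtr0_norm Z0) ler_pdivrMr //.
apply: (le_trans (ler_norm_sum _ _ _)).
rewrite /Cb mulr_suml; apply: ler_sum => j _.
rewrite normrM (gtr0_norm (Ez_gt0 _ _)); apply: ler_wpM2l => //.
exact: Ez_le_Zs.
Qed.

Lemma rr_bound (y : R) : `|rr y| <= C2b.
Proof.
have Z0 := Zs_gt0 y.
rewrite /rr normrM normfV (gtr0_norm Z0) ler_pdivrMr //.
apply: (le_trans (ler_norm_sum _ _ _)).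
rewrite /C2b mulr_suml; apply: ler_sum => j _.
rewrite normrM (gtr0_norm (Ez_gt0 _ _)) ger0_norm ?sqr_ge0 //; apply: ler_wpM2l.
  exact: sqr_ge0.
exact: Ez_le_Zs.
Qed.

Lemma F2_bound (y : R) : `|F2 y| <= 5 * Cb ^+ 2 + C2b.
Proof.
have /andP[P0 P1] := pp_bounds y.
have hq := qq_bound y; have hr := rr_bound y; have hc := c_le_Cb s.
have C0 := Cb_ge0; have C20 := C2b_ge0.
rewrite /F2; move: (pp y) (qq y) (rr y) (c s) P0 P1 hq hr hc => P Q Rr S P0 P1.
rewrite !ler_norml => /andP[q1 q2] /andP[r1 r2] /andP[c1 c2].
set X := (S - Q) * (S - Q); set Y := Rr - Q ^+ 2.
have X0 : 0 <= X by rewrite /X -expr2 sqr_ge0.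
have X1 : X <= 4 * Cb ^+ 2.
  have : 0 <= (2 * Cb - (S - Q)) * (2 * Cb + (S - Q)) by apply: mulr_ge0; lra.
  rewrite /X; nra.
have Q2 : Q ^+ 2 <= Cb ^+ 2.
  have : 0 <= (Cb - Q) * (Cb + Q) by apply: mulr_ge0; lra.
  rewrite expr2; nra.
have Q20 : 0 <= Q ^+ 2 by exact: sqr_ge0.
have Y1 : Y <= C2b by rewrite /Y; lra.
have Y2 : - (C2b + Cb ^+ 2) <= Y by rewrite /Y; lra.
have h1 : 0 <= (1 - P) * X by apply: mulr_ge0; lra.
have h2 : 0 <= P * X by apply: mulr_ge0.
have h3 : 0 <= P * (C2b - Y) by apply: mulr_ge0; lra.
have h4 : 0 <= P * (C2b + Cb ^+ 2 + Y) by apply: mulr_ge0; lra.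
have h5 : 0 <= (1 - P) * (C2b + Cb ^+ 2) by apply: mulr_ge0; lra.
have h6 : 0 <= (1 - P) * C2b by apply: mulr_ge0; lra.
have h7 : 0 <= Cb ^+ 2 by exact: sqr_ge0.
rewrite -mulrA -/X; apply/andP; split; nra.
Qed.

End Softmax.

Section Game1.
Context {R : realType} {n : nat} {m : 'I_n -> nat}.
Context (adj : rel 'I_n) (A : forall i j : 'I_n, 'M[R]_(m i, m j)) (beta : R).

Lemma util_lin (x d : pstate R m) (t : R) i s :
  util adj A beta (fun z => x z + t * d z) i s =
  util adj A beta x i s + t * util adj A beta d i s.
Proof.
rewrite /util /payoff_ij.
have -> : \sum_(j < n | adj i j) \sum_(s' < m j) A i j s s' * (x (ck j s') + t * d (ck j s'))
  = \sum_(j < n | adj i j) \sum_(s' < m j) A i j s s' * x (ck j s')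
    + t * \sum_(j < n | adj i j) \sum_(s' < m j) A i j s s' * d (ck j s').
  rewrite mulr_sumr -big_split; apply: eq_bigr => j _.
  rewrite mulr_sumr -big_split; apply: eq_bigr => s' _ /=; ring.
ring.
Qed.

Definition dvec (k : pcoord m) : pstate R m := upd (fun _ => 0) k 1.

Definition cvec (i : 'I_n) (k : pcoord m) (s' : 'I_(m i)) : R :=
  util adj A beta (dvec k) i s'.

Definition Kb (i : 'I_n) (k : pcoord m) : R :=
  5 * Cb (cvec i k) ^+ 2 + C2b (cvec i k).

Lemma Kb_ge0 i k : 0 <= Kb i k.
Proof.
rewrite /Kb; apply: addr_ge0; last exact: C2b_ge0.
apply: mulr_ge0 => //; exact: sqr_ge0.
Qed.

Lemma d2logit_bound (x : pstate R m) i s k :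
  `|d2logit adj A beta x i s k| <= Kb i k.
Proof.
pose a' := fun s' => util adj A beta x i s' - x k * cvec i k s'.
have E : (fun y => logit adj A beta (upd x k y) i s) =
         (fun z => Ez a' (cvec i k) s z / Zs a' (cvec i k) z).
  apply/funext => y; rewrite /logit /Ez /Zs /a'.
  have U : forall s', util adj A beta (upd x k y) i s' =
      util adj A beta x i s' - x k * cvec i k s' + cvec i k s' * y.
    move=> s'.
    have -> : upd x k y = (fun z => x z + (y - x k) * dvec k z).
      apply/funext => z; rewrite /dvec /upd.
      case: eqP => [->|_] /=; ring.
    rewrite util_lin /cvec; ring.
  congr (_ / _); first by rewrite U.
  by apply: eq_bigr => s' _; rewrite U.
rewrite /d2logit E d2_softmax; exact: F2_bound.
Qed.

End Game1.

Lemma part1 (R : realType) (n : nat) (m : 'I_n -> nat)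
    (adj : rel 'I_n) (A : forall i j : 'I_n, 'M[R]_(m i, m j))
    (beta lambda : R) (sigma2 : pcoord m -> R)
    (hlambda : 0 <= lambda) (hsigma : forall k, 0 <= sigma2 k) :
  asymptotically_autonomous
    (het_rhs_tau adj A beta lambda sigma2) (limit_rhs adj A beta).
Proof.
pose Bk (k : pcoord m) : R := let: existT i s := k in
  \sum_(j < n | adj i j) \sum_(s' < m j) Kb adj A beta i (ck j s') * sigma2 (ck j s').
pose Btot := \sum_(k : pcoord m) Bk k.
have Bk0 : forall k, 0 <= Bk k.
  case=> i s; apply: sumr_ge0 => j _; apply: sumr_ge0 => s' _.
  exact: mulr_ge0 (Kb_ge0 _ _ _ _ _) (hsigma _).
have BkB : forall k, Bk k <= Btot.
  move=> k; rewrite /Btot (bigD1 k) //= lerDl; exact: sumr_ge0.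
have Btot0 : 0 <= Btot by exact: sumr_ge0.
have L0 : 0 < lambda + 1 by lra.
have key : forall tau x k,
  `|het_rhs_tau adj A beta lambda sigma2 tau x k - limit_rhs adj A beta x k|
    <= (expR tau ^+ 2)^-1 * Btot.
  move=> tau x k.
  have eP : 0 < expR tau := expR_gt0 tau.
  have PE : lambda + t_of_tau lambda tau + 1 = (lambda + 1) * expR tau.
    by rewrite /t_of_tau; lra.
  have P0 : (lambda + 1) * expR tau != 0 by apply: lt0r_neq0; exact: mulr_gt0.
  have uE : (lambda + 1) / ((lambda + 1) * expR tau) = (expR tau)^-1.
    by rewrite invfM mulrA mulfV ?mul1r // lt0r_neq0.
  apply: (@le_trans _ _ ((expR tau ^+ 2)^-1 * Bk k)); last first.
    by rewrite ler_wpM2l // invr_ge0 exprn_ge0 // ltW.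
  case: k => i s; rewrite /het_rhs_tau /het_rhs /limit_rhs /Defs.variance /= PE uE.
  set T := \sum_(j < n | adj i j) \sum_(s' < m j) _.
  set f := logit adj A beta x i s - x (existT _ i s).
  have -> : (lambda + 1) * expR tau * (f / ((lambda + 1) * expR tau) + T / (2 * ((lambda + 1) * expR tau))) - f
      = T / 2 by field; apply/andP; split; apply: lt0r_neq0 => //.
  have TE : T = (expR tau ^+ 2)^-1 * \sum_(j < n | adj i j) \sum_(s' < m j)
      d2logit adj A beta x i s (ck j s') * sigma2 (ck j s').
    rewrite /T mulr_sumr; apply: eq_bigr => j _.
    rewrite mulr_sumr; apply: eq_bigr => s' _.
    rewrite -exprVn; ring.
  rewrite TE normrM normrM gtr0_norm ?invr_gt0 ?exprn_gt0 //.
  rewrite -mulrA ler_pM2l ?invr_gt0 ?exprn_gt0 //.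
  rewrite normfV (@gtr0_norm _ 2) // ler_pdivrMr //.
  apply: (le_trans (ler_norm_sum _ _ _)).
  apply: (@le_trans _ _ (Bk (existT _ i s))); last first.
    by rewrite ler_peMr // ?Bk0 // ler1n.
  apply: ler_sum => j _; apply: (le_trans (ler_norm_sum _ _ _)).
  apply: ler_sum => s' _; rewrite normrM (ger0_norm (hsigma _)).
  apply: ler_wpM2r; first exact: hsigma.
  exact: d2logit_bound.
move=> C _ e e0.
exists (ln ((Btot + 1) / e) / 2) => tau htau x _ k.
apply: (le_lt_trans (key tau x k)).
have E2 : (Btot + 1) / e < expR tau ^+ 2.
  rewrite -expRM_natl -[X in X < _]lnK; last by rewrite posrE divr_gt0 //; lra.
  by rewrite ltr_expR; lra.
have eP : 0 < expR tau ^+ 2 by rewrite exprn_gt0 // expR_gt0.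
rewrite mulrC ltr_pdivrMr //.
move: E2; rewrite ltr_pdivrMr // => E2.
rewrite mulrC; lra.
Qed.

Lemma derive1_is {R : realType} {f : R -> R} {x : R} :
  derivable f x 1 -> is_derive x 1 f (derive1 f x).
Proof. by move=> H; rewrite derive1E; apply: derivableP. Qed.

Lemma is_derive_reg {R : realType} {f : R -> R^o} {x d : R} :
  is_derive x 1 (f : R -> R) d -> derivable f x 1 /\ derive1 f x = d.
Proof.
move=> D; split; first exact: (@ex_derive _ _ _ _ _ _ _ D).
rewrite derive1E; exact: (@derive_val _ _ _ _ _ _ _ D).
Qed.

Lemma Btau (R : realType) (n : nat) (m : 'I_n -> nat) adj
    (A : forall i j : 'I_n, 'M[R]_(m i, m j)) beta lambda (hl : 0 <= lambda)
    (nu : R -> pstate R m) :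
  solves_on (fun _ => limit_rhs adj A beta) `]0, +oo[ nu ->
  solves_on (hom_rhs adj A beta lambda) `]0, +oo[
       (fun t => nu (tau_of_t lambda t)).
Proof.
move=> H t; rewrite /= in_itv /= andbT => t0 k.
have L0 : 0 < lambda + 1 by lra.
have Lt0 : 0 < lambda + t + 1 by lra.
have ht : `]0, +oo[ (tau_of_t lambda t).
  rewrite /= in_itv /= andbT /tau_of_t; apply: ln_gt0.
  by rewrite ltr_pdivlMr // mul1r; lra.
have [Hd He] := H _ ht k.
have Dg : is_derive t 1 (fun r => (lambda + r + 1) / (lambda + 1)) (lambda + 1)^-1.
  have K := is_derive_affine ((lambda+1)^-1 * (lambda+1)) ((lambda+1)^-1) t.
  have E : (fun r : R => (lambda+1)^-1 * (lambda+1) + (lambda+1)^-1 * r) =1 (fun r => (lambda + r + 1) / (lambda + 1)).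
    by move=> r /=; ring.
  exact (is_derive_ext E K erefl).
have Dl := is_derive1_ln (_ : 0 < (lambda + t + 1) / (lambda + 1)).
have Dtau : is_derive t 1 (tau_of_t lambda) ((lambda + t + 1)^-1).
  have := @is_derive1_comp _ (@ln R) (fun r => (lambda + r + 1) / (lambda + 1)) t _ _ (Dl (divr_gt0 Lt0 L0)) Dg.
  by rewrite invf_div mulrC mulrA mulVf ?gt_eqF // mul1r.
have D := is_derive1_comp (derive1_is Hd) Dtau.
have [D1 D2] := is_derive_reg D.
split; first exact: D1.
rewrite D2 He.
by case: k {Hd He D D1 D2} => i s /=.
Qed.

Lemma Atau (R : realType) (n : nat) (m : 'I_n -> nat) adj
    (A : forall i j : 'I_n, 'M[R]_(m i, m j)) beta lambda (hl : 0 <= lambda)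
    (mu : R -> pstate R m) :
  solves_on (hom_rhs adj A beta lambda) `]0, +oo[ mu ->
  solves_on (fun _ => limit_rhs adj A beta) `]0, +oo[
       (fun tau => mu (t_of_tau lambda tau)).
Proof.
move=> H r; rewrite /= in_itv /= andbT => r0 k.
have L0 : 0 < lambda + 1 by lra.
have e1 : 1 < expR r by rewrite expR_gt1.
have ht : `]0, +oo[ (t_of_tau lambda r).
  rewrite /= in_itv /= andbT /t_of_tau.
  have : (lambda + 1) * 1 < (lambda + 1) * expR r by rewrite ltr_pM2l.
  lra.
have [Hd He] := H _ ht k.
have Da : is_derive (expR r) 1 (fun y : R => (- lambda - 1) + (lambda + 1) * y) (lambda + 1)
  := is_derive_affine _ _ _.
have Dt : is_derive r 1 (t_of_tau lambda) ((lambda + 1) * expR r).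
  have := @is_derive1_comp _ (fun y : R => (- lambda - 1) + (lambda + 1) * y) (@expR R) r _ _ Da (is_derive_expR r).
  move=> K; apply: (is_derive_ext _ K erefl) => y /=; rewrite /t_of_tau; lra.
have D := is_derive1_comp (derive1_is Hd) Dt.
have [D1 D2] := is_derive_reg D.
split; first exact: D1.
rewrite D2 He.
have E : lambda + t_of_tau lambda r + 1 = (lambda + 1) * expR r by rewrite /t_of_tau; lra.
case: k {Hd He D D1 D2} => i s /=; rewrite E mulrC mulrA mulrC mulrA mulVf ?mul1r //.
by rewrite gt_eqF // mulr_gt0 // expR_gt0.
Qed.

Lemma tau_t (R : realType) (lambda : R) (hl : 0 <= lambda) r :
  tau_of_t lambda (t_of_tau lambda r) = r.
Proof.
rewrite /tau_of_t /t_of_tau.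
have -> : lambda + ((lambda + 1) * expR r - lambda - 1) + 1 = (lambda + 1) * expR r by lra.
by rewrite mulrC mulKf ?expRK // gt_eqF //; lra.
Qed.

Lemma t_tau (R : realType) (lambda : R) (hl : 0 <= lambda) r :
  - lambda - 1 < r -> t_of_tau lambda (tau_of_t lambda r) = r.
Proof.
move=> hr; rewrite /tau_of_t /t_of_tau lnK; last first.
  by rewrite posrE divr_gt0 //; lra.
rewrite mulrC divfK; first lra.
by rewrite gt_eqF //; lra.
Qed.

Lemma part23 (R : realType) (n : nat) (m : 'I_n -> nat) adj
    (A : forall i j : 'I_n, 'M[R]_(m i, m j)) beta lambda (hl : 0 <= lambda) :
  (forall nu : R -> pstate R m,
     solves_on (fun _ => limit_rhs adj A beta) `]0, +oo[ nu <->
     solves_on (hom_rhs adj A beta lambda) `]0, +oo[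
       (fun t => nu (tau_of_t lambda t)))
  /\
  (forall mu : R -> pstate R m,
     solves_on (hom_rhs adj A beta lambda) `]0, +oo[ mu <->
     solves_on (fun _ => limit_rhs adj A beta) `]0, +oo[
       (fun tau => mu (t_of_tau lambda tau))).
Proof.
split=> f; split; first exact: (@Btau R n m adj A beta lambda hl).
- move=> /(@Atau R n m adj A beta lambda hl).
  have -> // : (fun tau => f (tau_of_t lambda (t_of_tau lambda tau))) = f.
  by apply/funext => r; rewrite tau_t.
- exact: (@Atau R n m adj A beta lambda hl).
- move=> /(@Btau R n m adj A beta lambda hl) H t ht k.
  have [Hd He] := H t ht k.
  have ht0 : 0 < t by move: ht; rewrite /= in_itv /= andbT.
  have N : \forall r \near nbhs t, f (t_of_tau lambda (tau_of_t lambda r)) k = f r k.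
    have : - lambda - 1 < t by lra.
    move=> /lt_nbhsr; apply: filterS => r hr.
    by rewrite t_tau.
  have D := near_eq_is_derive N (derive1_is Hd).
  have [D1 D2] := is_derive_reg D.
  split; first exact: D1.
  rewrite D2 He /=.
  by rewrite t_tau //; lra.
Qed.

Theorem lemma1 (R : realType) (n : nat) (m : 'I_n -> nat)
    (adj : rel 'I_n) (adj_sym : symmetric adj) (adj_irr : irreflexive adj)
    (A : forall i j : 'I_n, 'M[R]_(m i, m j))
    (beta lambda : R) (sigma2 : pcoord m -> R)
    (hbeta : 0 < beta) (hlambda : 0 <= lambda)
    (hsigma : forall k, 0 <= sigma2 k) :
  (* (1) the reparametrized heterogeneous mean dynamics are asymptotically
     autonomous with limit equation d mu/d tau = f(mu) - mu *)
  asymptotically_autonomous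
    (het_rhs_tau adj A beta lambda sigma2) (limit_rhs adj A beta)
  /\
  (* (2) the limit equation is equivalent, via tau = ln((lambda+t+1)/(lambda+1)),
     to the homogeneous belief dynamics d mu/dt = (f(mu) - mu)/(lambda+t+1) *)
  (forall nu : R -> pstate R m,
     solves_on (fun _ => limit_rhs adj A beta) `]0, +oo[ nu <->
     solves_on (hom_rhs adj A beta lambda) `]0, +oo[
       (fun t => nu (tau_of_t lambda t)))
  /\
  (forall mu : R -> pstate R m,
     solves_on (hom_rhs adj A beta lambda) `]0, +oo[ mu <->
     solves_on (fun _ => limit_rhs adj A beta) `]0, +oo[
       (fun tau => mu (t_of_tau lambda tau))).
Proof.
split; first exact: (@part1 R n m adj A beta lambda sigma2 hlambda hsigma).
exact: (@part23 R n m adj A beta lambda hlambda).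
Qed.
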